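(* Let $f$ be a binary NAM on $n$ features, $x\in\mathbb{R}^n$, $\epsilon>0$. Suppose real numbers $\ell_k\le u_k$ ($k\in[n]$) satisfy $\ell_k\le\Delta_k\le u_k$ for every $k$. Let $S\subseteq[n]$ be a sufficient explanation for $(f,x,\epsilon)$, let $i\in S$ and $j\notin S$, and suppose $u_i\le \ell_j$ (in particular, this holds whenever the intervals $[\ell_k,u_k]$ are pairwise non-overlapping and $i$ precedes $j$ in the ascending order of these intervals). Then $(S\setminus\{i\})\cup\{j\}$ is also a sufficient explanation for $(f,x,\epsilon)$.
   Context: A binary neural additive model (NAM) on $n$ features is a map $f:\mathbb{R}^n\to\{0,1\}$, $f(z)=\mathrm{step}\big(\beta_0+\sum_{k=1}^n f_k(z_k)\big)$, where $\beta_0\in\mathbb{R}$, each $f_k:\mathbb{R}\to\mathbb{R}$ is continuous (in the paper, a univariate ReLU neural network), and $\mathrm{step}(t)=1$ if $t\ge 0$ and $\mathrm{step}(t)=0$ otherwise. Fix $x\in\mathbb{R}^n$ and $\epsilon>0$ and let $B=\{\tilde x\in\mathbb{R}^n : |\tilde x_k-x_k|\le\epsilon \text{ for all } k\}$. For $S\subseteq[n]=\{1,\dots,n\}$ and $\tilde x\in\mathbb{R}^n$, $(x_S;\tilde x_{\bar S})$ denotes the vector agreeing with $x$ on the coordinates in $S$ and with $\tilde x$ on $\bar S=[n]\setminus S$. A set $S$ is a sufficient explanation for $(f,x,\epsilon)$ if $f(x_S;\tilde x_{\bar S})=f(x)$ for all $\tilde x\in B$. The importance of feature $k$ is $\Delta_k=f_k(x_k)-\min_{|t-x_k|\le\epsilon}f_k(t)$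 if $f(x)=1$, and $\Delta_k=\max_{|t-x_k|\le\epsilon}f_k(t)-f_k(x_k)$ if $f(x)=0$. *)

(* Defs.v *)
From HB Require Import structures.
From mathcomp Require Import all_boot all_order all_algebra.
From mathcomp Require Import all_classical all_reals all_analysis.
Set Implicit Arguments. Unset Strict Implicit. Unset Printing Implicit Defensive.
Import Order.TTheory GRing.Theory Num.Theory.
Import numFieldNormedType.Exports.
Local Open Scope classical_set_scope.
Local Open Scope ring_scope.

(* A binary NAM on n features: bias beta0 and shape functions fk k : R -> R.
   Its output is a bool: true stands for 1, false for 0. *)
Definition nam (R : realType) (n : nat) (beta0 : R) (fk : 'I_n -> R -> R)
  (z : 'I_n -> R) : bool :=
  (0 <= beta0 + \sum_(k < n) fk k (z k)).

Definition mixv (R : realType) (n : nat) (S : {set 'I_n}) (x xt : 'I_n -> R)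
  : 'I_n -> R := fun k => if k \in S then x k else xt k.

Definition in_box (R : realType) (n : nat) (x : 'I_n -> R) (eps : R)
  (xt : 'I_n -> R) : Prop := forall k, `|xt k - x k| <= eps.

Definition sufficient (R : realType) (n : nat) (f : ('I_n -> R) -> bool)
  (x : 'I_n -> R) (eps : R) (S : {set 'I_n}) : Prop :=
  forall xt, in_box x eps xt -> f (mixv S x xt) = f x.

(* Importance Delta_k; for continuous g the inf/sup over the compact interval
   is the min/max. *)
Definition importance (R : realType) (n : nat) (beta0 : R)
  (fk : 'I_n -> R -> R) (x : 'I_n -> R) (eps : R) (k : 'I_n) : R :=
  if nam beta0 fk x then
    fk k (x k) - inf [set fk k t | t in [set t | `|t - x k| <= eps]]
  else
    sup [set fk k t | t in [set t | `|t - x k| <= eps]] - fk k (x k).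

(* Main.v *)
Require Import Defs.
From HB Require Import structures.
From mathcomp Require Import all_boot all_order all_algebra.
From mathcomp Require Import all_classical all_reals all_analysis.
From mathcomp Require Import lra.
Import Order.TTheory GRing.Theory Num.Theory.
Import numFieldNormedType.Exports.
Local Open Scope classical_set_scope.
Local Open Scope ring_scope.

Lemma inball_itv (R : realType) (x0 eps t : R) :
  (`|t - x0| <= eps) = (t \in `[x0 - eps, x0 + eps]).
Proof. by rewrite ler_distl in_itv. Qed.

Lemma min_img (R : realType) (g : R -> R) (x0 eps : R) :
  continuous g -> 0 < eps ->
  exists2 c, `|c - x0| <= eps &
   inf [set g t | t in [set t | `|t - x0| <= eps]] = g c /\
   (forall t, `|t - x0| <= eps -> g c <= g t).
Proof.
move=> cg he.
have le : x0 - eps <= x0 + eps by rewrite lerD2l; apply: (le_trans _ (ltW he)); rewrite lerNl oppr0 ltW.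
have [c hc hmin] := EVT_min le (continuous_subspaceT cg).
exists c; first by rewrite inball_itv.
have hm : forall t, `|t - x0| <= eps -> g c <= g t by move=> t; rewrite inball_itv; apply: hmin.
split => //.
apply/eqP; rewrite eq_le; apply/andP; split.
  apply: ge_inf; first by exists (g c) => y [t ht <-]; exact: hm.
  by exists c => //=; rewrite inball_itv.
apply: lb_le_inf; first by exists (g c), c => //=; rewrite inball_itv.
by move=> y [t ht <-]; exact: hm.
Qed.

Lemma max_img (R : realType) (g : R -> R) (x0 eps : R) :
  continuous g -> 0 < eps ->
  exists2 c, `|c - x0| <= eps &
   sup [set g t | t in [set t | `|t - x0| <= eps]] = g c /\
   (forall t, `|t - x0| <= eps -> g t <= g c).
Proof.
move=> cg he.
have le : x0 - eps <= x0 + eps by rewrite lerD2l; apply: (le_trans _ (ltW he)); rewrite lerNl oppr0 ltW.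
have [c hc hmax] := EVT_max le (continuous_subspaceT cg).
exists c; first by rewrite inball_itv.
have hm : forall t, `|t - x0| <= eps -> g t <= g c by move=> t; rewrite inball_itv; apply: hmax.
split => //.
apply/eqP; rewrite eq_le; apply/andP; split.
  apply: ge_sup; first by exists (g c), c => //=; rewrite inball_itv.
  by move=> y [t ht <-]; exact: hm.
apply: ub_le_sup; first by exists (g c) => y [t ht <-]; exact: hm.
by exists c => //=; rewrite inball_itv.
Qed.

Lemma sum_swap (R : realType) (n : nat) (fk : 'I_n -> R -> R) (x xt : 'I_n -> R)
  (S : {set 'I_n}) (i j : 'I_n) (c : R) :
  i \in S -> j \notin S ->
  \sum_(k < n) fk k (mixv ((S :\ i) :|: [set j]) x xt k) =
  \sum_(k < n) fk k (mixv S x (fun k => if k == j then c else xt k) k)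
  + (fk j (x j) - fk j c) - (fk i (x i) - fk i (xt i)).
Proof.
move=> hi hj.
have ij : i != j by apply: contraNneq hj => <-.
have pw : forall k, fk k (mixv ((S :\ i) :|: [set j]) x xt k) =
   fk k (mixv S x (fun k => if k == j then c else xt k) k)
   + (if k == j then fk j (x j) - fk j c else 0)
   - (if k == i then fk i (x i) - fk i (xt i) else 0).
  move=> k; rewrite /mixv finset.in_setU finset.in_setD1 finset.in_set1.
  case: (eqVneq k j) => [->|kj].
    by rewrite orbT eq_sym (negbTE ij) subr0 (negbTE hj) addrCA subrr addr0.
  case: (eqVneq k i) => [->|ki].
    by rewrite hi /= addr0 opprB addrCA subrr addr0.
  by rewrite orbF addr0 subr0.
rewrite (eq_bigr _ (fun k _ => pw k)) sumrB big_split /=.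
by rewrite -!big_mkcond /= !big_pred1_eq.
Qed.

Theorem proposition1 (R : realType) (n : nat) (beta0 : R)
  (fk : 'I_n -> R -> R) (x : 'I_n -> R) (eps : R)
  (l u : 'I_n -> R) (S : {set 'I_n}) (i j : 'I_n) :
  (forall k, continuous (fk k)) ->
  0 < eps ->
  (forall k, l k <= u k) ->
  (forall k, l k <= importance beta0 fk x eps k <= u k) ->
  sufficient (nam beta0 fk) x eps S ->
  i \in S -> j \notin S ->
  u i <= l j ->
  sufficient (nam beta0 fk) x eps ((S :\ i) :|: [set j]).
Proof.
move=> hc he _ hb hS hi hj hij xt hxt.
have hDi := hb i; have hDj := hb j.
move: hDi hDj; rewrite /importance.
case hx: (nam beta0 fk x) => /andP[_ hui] /andP[hlj _].
- have [c hcx [hinf _]] := min_img _ (fk j) (x j) eps (hc j) he.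
  have [ci _ [hinfi hmi]] := min_img _ (fk i) (x i) eps (hc i) he.
  rewrite hinf in hlj; rewrite hinfi in hui.
  have hbox : in_box x eps (fun k => if k == j then c else xt k).
    by move=> k /=; case: eqP => [->|_] //.
  have := hS _ hbox; rewrite hx /nam => h2.
  rewrite /nam (sum_swap _ _ _ _ _ _ _ _ c hi hj).
  have := hmi (xt i) (hxt i) => hm.
  have : u i <= l j := hij.
  move: h2; set A := \sum_(k < n) _ => h2 hul.
  lra.
- have [c hcx [hsup _]] := max_img _ (fk j) (x j) eps (hc j) he.
  have [ci _ [hsupi hmi]] := max_img _ (fk i) (x i) eps (hc i) he.
  rewrite hsup in hlj; rewrite hsupi in hui.
  have hbox : in_box x eps (fun k => if k == j then c else xt k).
    by move=> k /=; case: eqP => [->|_] //.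
  have := hS _ hbox; rewrite hx /nam => /negbT; rewrite -ltNge => h2.
  rewrite /nam; apply/negbTE; rewrite -ltNge.
  rewrite /nam (sum_swap _ _ _ _ _ _ _ _ c hi hj).
  have := hmi (xt i) (hxt i) => hm.
  have : u i <= l j := hij.
  move: h2; set A := \sum_(k < n) _ => h2 hul.
  lra.
Qed.
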